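(* Let $q$ be a power of a prime $p \neq 2,3$, let $b,c \in \mathbb F_q$ be such that $g(T) = T^3 + bT^2 + cT + 1$ is irreducible over $\mathbb F_q$, and let $F = y^2 - xz$, $G = x^2 + by^2 + cxy + yz$. Let $H_\pi(r,s) = \mathcal H(M_{rF+G}, M_{sF+G})$. Then: (i) $H_\pi$ is a polynomial of degree at most $2$ in $r$ whose coefficient of $r^2$ is a nonzero constant multiple of $h_0(s) = 3s^4 + 4bs^3 + 6cs^2 + 12 s + 4b - c^2$; (ii) the discriminant of $H_\pi$ with respect to $r$ equals a nonzero constant times $g(s)^2 \, f_\pi(s)$, where $f_\pi(s) = (b^2 - 3c)s^2 + (bc - 9)s + (c^2 - 3b)$; (iii) the coefficients $b^2-3c$ and $bc-9$ are not both zero, and $(bc-9)^2 - 4(b^2-3c)(c^2-3b) \neq 0$ (so $f_\pi$ is not a constant multiple of the square of a linear polynomial).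
   Context: For a quadratic form $K(x,y,z)$ over $\mathbb F_q$, $M_K$ denotes its symmetric $3\times 3$ matrix (so $K(v) = v^T M_K v$). For symmetric $3\times3$ matrices $A,B$, write $\det(tA+B) = \Delta_0 + \Delta_1 t + \Delta_2 t^2 + \Delta_3 t^3$ and set $\mathcal H(A,B) = \Delta_1^2 - 4\Delta_0\Delta_2$. *)

(* Defs.v *)
From HB Require Import structures.
From mathcomp Require Import all_boot all_order all_algebra all_field.
Set Implicit Arguments. Unset Strict Implicit. Unset Printing Implicit Defensive.
Import Order.TTheory GRing.Theory Num.Theory.
Local Open Scope ring_scope.

Record qform (R : Type) := QForm {
  kxx : R; kyy : R; kzz : R; kxy : R; kxz : R; kyz : R }.

Definition qf_eval (R : comRingType) (K : qform R) (x y z : R) : R :=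
  kxx K * x ^+ 2 + kyy K * y ^+ 2 + kzz K * z ^+ 2
  + kxy K * x * y + kxz K * x * z + kyz K * y * z.

Definition qf_lin (R : comRingType) (r : R) (K L : qform R) : qform R :=
  QForm (r * kxx K + kxx L) (r * kyy K + kyy L) (r * kzz K + kzz L)
        (r * kxy K + kxy L) (r * kxz K + kxz L) (r * kyz K + kyz L).

Definition qf_map (R S : Type) (f : R -> S) (K : qform R) : qform S :=
  QForm (f (kxx K)) (f (kyy K)) (f (kzz K)) (f (kxy K)) (f (kxz K)) (f (kyz K)).

(* the symmetric matrix M_K with K(v) = v^T M_K v (needs 2 invertible) *)
Definition qmat (R : comUnitRingType) (K : qform R) : 'M[R]_3 :=
  let h := (2%:R : R)^-1 in
  \matrix_(i < 3, j < 3)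
    match nat_of_ord i, nat_of_ord j with
    | 0, 0 => kxx K | 1, 1 => kyy K | 2, 2 => kzz K
    | 0, 1 | 1, 0 => h * kxy K
    | 0, 2 | 2, 0 => h * kxz K
    | _, _ => h * kyz K
    end.

Definition detpencil (R : comRingType) (A B : 'M[R]_3) : {poly R} :=
  \det ('X *: map_mx polyC A + map_mx polyC B).

Definition Hinv (R : comRingType) (A B : 'M[R]_3) : R :=
  let D := detpencil A B in D`_1 ^+ 2 - 4%:R * D`_0 * D`_2.

Definition disc2 (R : comRingType) (P : {poly R}) : R :=
  P`_1 ^+ 2 - 4%:R * P`_0 * P`_2.

Section Paper.
Variables (F : fieldType) (b c : F).

Definition gpoly : {poly F} := 'X^3 + b%:P * 'X^2 + c%:P * 'X + 1.

Definition Fform : qform F := QForm 0 1 0 0 (-1) 0.          (* y^2 - xz *)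
Definition Gform : qform F := QForm 1 b 0 c 0 1.             (* x^2+by^2+cxy+yz *)

(* Bivariate polynomials: outer variable r, inner variable s. *)
Definition lift2 (a : F) : {poly {poly F}} := (a%:P)%:P.
Definition rvar : {poly {poly F}} := 'X.
Definition svar : {poly {poly F}} := ('X)%:P.

Definition Hpi : {poly {poly F}} :=
  Hinv (qmat (qf_lin rvar (qf_map lift2 Fform) (qf_map lift2 Gform)))
       (qmat (qf_lin svar (qf_map lift2 Fform) (qf_map lift2 Gform))).

Definition h0 : {poly F} :=
  3%:R *: 'X^4 + (4%:R * b) *: 'X^3 + (6%:R * c) *: 'X^2 + 12%:R *: 'X
  + (4%:R * b - c ^+ 2)%:P.

Definition fpi : {poly F} :=
  (b ^+ 2 - 3%:R * c) *: 'X^2 + (b * c - 9%:R) *: 'X + (c ^+ 2 - 3%:R * b)%:P.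

End Paper.

(* Main.v *)
Require Import Defs.
From HB Require Import structures.
From mathcomp Require Import all_boot all_order all_algebra all_field.
From mathcomp Require Import ring.
Import Order.TTheory GRing.Theory Num.Theory.
Set Implicit Arguments. Unset Strict Implicit. Unset Printing Implicit Defensive.
Local Open Scope ring_scope.

Definition at3 (R : Type) (A : 'M[R]_3) (i j : nat) : R := A (inord i) (inord j).
Lemma at3E (R : Type) (A : 'M[R]_3) (i j : 'I_3) : A i j = at3 A i j.
Proof. by rewrite /at3 !inord_val. Qed.

Lemma det3 (R : comRingType) (A : 'M[R]_3) : \det A =
  at3 A 0 0 * at3 A 1 1 * at3 A 2 2 + at3 A 0 1 * at3 A 1 2 * at3 A 2 0
  + at3 A 0 2 * at3 A 1 0 * at3 A 2 1 - at3 A 0 2 * at3 A 1 1 * at3 A 2 0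
  - at3 A 0 1 * at3 A 1 0 * at3 A 2 2 - at3 A 0 0 * at3 A 1 2 * at3 A 2 1.
Proof.
rewrite (expand_det_row _ ord0) !big_ord_recl big_ord0 /cofactor.
rewrite !(expand_det_row _ ord0) !big_ord_recl !big_ord0 /cofactor !det_mx11.
rewrite !mxE !at3E /bump /=.
rewrite !expr0 !expr1 !expr2; ring.
Qed.


Definition dt (R : comRingType) (x00 x01 x02 x10 x11 x12 x20 x21 x22 : R) :=
  x00*x11*x22 + x01*x12*x20 + x02*x10*x21 - x02*x11*x20 - x01*x10*x22 - x00*x12*x21.

Section Pencil.
Variables (R : comRingType) (A B : 'M[R]_3).
Local Notation a := (at3 A). Local Notation b := (at3 B).
Definition dd0 := dt (b 0 0) (b 0 1) (b 0 2) (b 1 0) (b 1 1) (b 1 2) (b 2 0) (b 2 1) (b 2 2).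
Definition dd3 := dt (a 0 0) (a 0 1) (a 0 2) (a 1 0) (a 1 1) (a 1 2) (a 2 0) (a 2 1) (a 2 2).
Definition dd1 :=
    dt (a 0 0) (b 0 1) (b 0 2) (a 1 0) (b 1 1) (b 1 2) (a 2 0) (b 2 1) (b 2 2)
  + dt (b 0 0) (a 0 1) (b 0 2) (b 1 0) (a 1 1) (b 1 2) (b 2 0) (a 2 1) (b 2 2)
  + dt (b 0 0) (b 0 1) (a 0 2) (b 1 0) (b 1 1) (a 1 2) (b 2 0) (b 2 1) (a 2 2).
Definition dd2 :=
    dt (b 0 0) (a 0 1) (a 0 2) (b 1 0) (a 1 1) (a 1 2) (b 2 0) (a 2 1) (a 2 2)
  + dt (a 0 0) (b 0 1) (a 0 2) (a 1 0) (b 1 1) (a 1 2) (a 2 0) (b 2 1) (a 2 2)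
  + dt (a 0 0) (a 0 1) (b 0 2) (a 1 0) (a 1 1) (b 1 2) (a 2 0) (a 2 1) (b 2 2).

Lemma at3_pencil i j : at3 ('X *: map_mx polyC A + map_mx polyC B) i j
  = 'X * (a i j)%:P + (b i j)%:P.
Proof. by rewrite /at3 !mxE. Qed.

Lemma detpencilE : detpencil A B =
  dd0%:P + dd1%:P * 'X + dd2%:P * 'X^2 + dd3%:P * 'X^3.
Proof.
rewrite /detpencil det3 !at3_pencil /dd0 /dd1 /dd2 /dd3 /dt.
rewrite !(rmorphD, rmorphB, rmorphM).
ring.
Qed.

Lemma HinvE : Hinv A B = dd1 ^+ 2 - 4%:R * dd0 * dd2.
Proof.
rewrite /Hinv detpencilE.
rewrite !coefD !coefCM !coefC !coefXn !coefX /=.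
rewrite !mulr0 !mulr1 !addr0 !add0r. done.
Qed.
End Pencil.

Section Q.
Variables (R : comUnitRingType) (K : qform R).
Local Notation h := ((2%:R : R)^-1).
Lemma qm00 : at3 (qmat K) 0 0 = kxx K. Proof. by rewrite /at3 mxE !inordK. Qed.
Lemma qm11 : at3 (qmat K) 1 1 = kyy K. Proof. by rewrite /at3 mxE !inordK. Qed.
Lemma qm22 : at3 (qmat K) 2 2 = kzz K. Proof. by rewrite /at3 mxE !inordK. Qed.
Lemma qm01 : at3 (qmat K) 0 1 = h * kxy K. Proof. by rewrite /at3 mxE !inordK. Qed.
Lemma qm10 : at3 (qmat K) 1 0 = h * kxy K. Proof. by rewrite /at3 mxE !inordK. Qed.
Lemma qm02 : at3 (qmat K) 0 2 = h * kxz K. Proof. by rewrite /at3 mxE !inordK. Qed.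
Lemma qm20 : at3 (qmat K) 2 0 = h * kxz K. Proof. by rewrite /at3 mxE !inordK. Qed.
Lemma qm12 : at3 (qmat K) 1 2 = h * kyz K. Proof. by rewrite /at3 mxE !inordK. Qed.
Lemma qm21 : at3 (qmat K) 2 1 = h * kyz K. Proof. by rewrite /at3 mxE !inordK. Qed.
End Q.

Section Main.
Variables (F : fieldType) (b c : F).
Local Notation X := ('X : {poly F}).
Local Notation B := (b%:P : {poly F}).
Local Notation C := (c%:P : {poly F}).
Local Notation Hh := (((2%:R : F)^-1)%:P : {poly F}).

Lemma h2E : (2%:R : {poly {poly F}})^-1 = Hh%:P.
Proof.
have -> : (2%:R : {poly {poly F}}) = ((2%:R : F)%:P)%:P by rewrite !rmorph_nat.
by rewrite !polyCV.
Qed.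

Definition P0 : {poly F} := (- 3%:R * Hh^+4 - 8%:R * X * C * Hh^+5 - 6%:R * X^+2 * B * Hh^+4 - 12%:R * X^+3 * Hh^+4 - 8%:R * X^+4 * C * Hh^+5 + X^+4 * B^+2 * Hh^+4).
Definition P1 : {poly F} := (- 4%:R * C * Hh^+5 - 16%:R * X * C^+2 * Hh^+6 + 4%:R * X * B * Hh^+4 + 18%:R * X^+2 * Hh^+4 - 12%:R * X^+2 * B * C * Hh^+5 + 8%:R * X^+3 * C * Hh^+5 - 4%:R * X^+3 * B^+2 * Hh^+4 - 2%:R * X^+4 * B * Hh^+4).
Definition P2 : {poly F} := (4%:R * C^+2 * Hh^+6 - 4%:R * B * Hh^+4 - 12%:R * X * Hh^+4 - 12%:R * X^+2 * C * Hh^+5 - 4%:R * X^+3 * B * Hh^+4 - 3%:R * X^+4 * Hh^+4).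

Lemma HpiE : Hpi b c = P0%:P + P1%:P * 'X + P2%:P * 'X^2.
Proof.
rewrite /Hpi HinvE /dd0 /dd1 /dd2 /dt.
rewrite !(qm00, qm11, qm22, qm01, qm10, qm02, qm20, qm12, qm21) /= /lift2 h2E.
rewrite /P0 /P1 /P2.
rewrite /rvar /svar.
ring.
Qed.

Hypothesis h2 : (2%:R : F) != 0.
Hypothesis h3 : (3%:R : F) != 0.

Lemma Hh2 : 2%:R * Hh = 1.
Proof. by rewrite -(rmorph_nat polyC) -rmorphM mulfV. Qed.

Lemma modh (x y r : {poly F}) : x - y = (2%:R * Hh - 1) * r -> x = y.
Proof. by move=> e; apply/eqP; rewrite -subr_eq0 e Hh2 subrr mul0r. Qed.

Lemma Hpi_coef0 : (Hpi b c)`_0 = P0.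
Proof. by rewrite HpiE !coefD !coefCM !coefC !coefXn !coefX /= !mulr0 !addr0. Qed.
Lemma Hpi_coef1 : (Hpi b c)`_1 = P1.
Proof. by rewrite HpiE !coefD !coefCM !coefC !coefXn !coefX /= !mulr0 !mulr1 !addr0 add0r. Qed.
Lemma Hpi_coef2 : (Hpi b c)`_2 = P2.
Proof. by rewrite HpiE !coefD !coefCM !coefC !coefXn !coefX /= !mulr0 !mulr1 !addr0 !add0r. Qed.

Lemma Hpi_size : (size (Hpi b c) <= 3)%N.
Proof.
apply/leq_sizeP => j hj; rewrite HpiE !coefD !coefCM !coefC !coefXn !coefX.
by case: j hj => [|[|[|j]]] //= _; rewrite !mulr0 !addr0.
Qed.

Lemma part1 : (Hpi b c)`_2 = (- ((2%:R : F)^-1 ^+ 4)) *: h0 b c.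
Proof.
rewrite Hpi_coef2 /h0 -!mul_polyC.
apply: (modh (r:=(C^+2 * Hh^+4 + 2%:R * C^+2 * Hh^+5 - 6%:R * X^+2 * C * Hh^+4))). rewrite /P2. ring.
Qed.

Lemma part2 : disc2 (Hpi b c) = ((2%:R : F)^-1 ^+ 4) *: (gpoly b c ^+ 2 * fpi b c).
Proof.
rewrite /disc2 Hpi_coef0 Hpi_coef1 Hpi_coef2 /gpoly /fpi -!mul_polyC.
apply: (modh (r:=(C^+2 * Hh^+4 + 2%:R * C^+2 * Hh^+5 + 4%:R * C^+2 * Hh^+6 + 8%:R * C^+2 * Hh^+7 + 16%:R * C^+2 * Hh^+8 + 32%:R * C^+2 * Hh^+9 - 3%:R * B * Hh^+4 - 6%:R * B * Hh^+5 - 12%:R * B * Hh^+6 - 24%:R * B * Hh^+7 - 9%:R * X * Hh^+4 - 18%:R * X * Hh^+5 - 36%:R * X * Hh^+6 - 72%:R * X * Hh^+7 + 2%:R * X * C^+3 * Hh^+4 + 4%:R * X * C^+3 * Hh^+5 + 8%:R * X * C^+3 * Hh^+6 + 16%:R * X * C^+3 * Hh^+7 + 32%:R * X * C^+3 * Hh^+8 + 64%:R * X * C^+3 * Hh^+9 + 128%:R * X * C^+3 * Hh^+10 - 5%:R * X * B * C * Hh^+4 - 10%:R * X * B * C * Hh^+5 - 20%:R * X * B * C * Hh^+6 - 40%:R * X * B * C * Hh^+7 - 80%:R * X * B * C * Hh^+8 - 21%:R * X^+2 * C * Hh^+4 - 42%:R * X^+2 * C * Hh^+5 - 84%:R * X^+2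 * C * Hh^+6 - 168%:R * X^+2 * C * Hh^+7 - 336%:R * X^+2 * C * Hh^+8 + X^+2 * C^+4 * Hh^+4 + 2%:R * X^+2 * C^+4 * Hh^+5 + 4%:R * X^+2 * C^+4 * Hh^+6 + 8%:R * X^+2 * C^+4 * Hh^+7 + 16%:R * X^+2 * C^+4 * Hh^+8 + 32%:R * X^+2 * C^+4 * Hh^+9 + 64%:R * X^+2 * C^+4 * Hh^+10 + 128%:R * X^+2 * C^+4 * Hh^+11 + X^+2 * B * C^+2 * Hh^+4 + 2%:R * X^+2 * B * C^+2 * Hh^+5 + 4%:R * X^+2 * B * C^+2 * Hh^+6 + 8%:R * X^+2 * B * C^+2 * Hh^+7 + 16%:R * X^+2 * B * C^+2 * Hh^+8 + 32%:R * X^+2 * B * C^+2 * Hh^+9 - 5%:R * X^+2 * B^+2 * Hh^+4 - 10%:R * X^+2 * B^+2 * Hh^+5 - 20%:R * X^+2 * B^+2 * Hh^+6 - 40%:R * X^+2 * B^+2 * Hh^+7 - 13%:R * X^+3 * C^+2 * Hh^+4 - 26%:R * X^+3 * C^+2 * Hh^+5 - 52%:R * X^+3 * C^+2 * Hh^+6 - 104%:R * X^+3 * C^+2 * Hh^+7 - 208%:R * X^+3 * C^+2 * Hh^+8 - 416%:R * X^+3 * C^+2 * Hh^+9 - 24%:R * X^+3 * B * Hh^+4 - 48%:R * X^+3 * B * Hh^+5 - 96%:R * X^+3 * B * Hh^+6 - 192%:R * X^+3 * B * Hh^+7 + 3%:R * X^+3 * B * C^+3 * Hh^+4 + 6%:R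 * X^+3 * B * C^+3 * Hh^+5 + 12%:R * X^+3 * B * C^+3 * Hh^+6 + 24%:R * X^+3 * B * C^+3 * Hh^+7 + 48%:R * X^+3 * B * C^+3 * Hh^+8 + 96%:R * X^+3 * B * C^+3 * Hh^+9 + 192%:R * X^+3 * B * C^+3 * Hh^+10 - 2%:R * X^+3 * B^+2 * C * Hh^+4 - 4%:R * X^+3 * B^+2 * C * Hh^+5 - 8%:R * X^+3 * B^+2 * C * Hh^+6 - 16%:R * X^+3 * B^+2 * C * Hh^+7 - 32%:R * X^+3 * B^+2 * C * Hh^+8 - 18%:R * X^+4 * Hh^+4 - 36%:R * X^+4 * Hh^+5 - 72%:R * X^+4 * Hh^+6 - 144%:R * X^+4 * Hh^+7 - X^+4 * C^+3 * Hh^+4 - 2%:R * X^+4 * C^+3 * Hh^+5 - 4%:R * X^+4 * C^+3 * Hh^+6 - 8%:R * X^+4 * C^+3 * Hh^+7 - 16%:R * X^+4 * C^+3 * Hh^+8 - 32%:R * X^+4 * C^+3 * Hh^+9 - 64%:R * X^+4 * C^+3 * Hh^+10 - 28%:R * X^+4 * B * C * Hh^+4 - 56%:R * X^+4 * B * C * Hh^+5 - 112%:R * X^+4 * B * C * Hh^+6 - 224%:R * X^+4 * B * C * Hh^+7 - 448%:R * X^+4 * B * C * Hh^+8 + 4%:R * X^+4 * B^+2 * C^+2 * Hh^+4 + 8%:R * X^+4 * B^+2 * C^+2 * Hh^+5 + 16%:R * X^+4 * B^+2 * C^+2 * Hh^+6 + 32%:R * X^+4 * B^+2 * C^+2 *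 Hh^+7 + 64%:R * X^+4 * B^+2 * C^+2 * Hh^+8 + 128%:R * X^+4 * B^+2 * C^+2 * Hh^+9 - X^+4 * B^+3 * Hh^+4 - 2%:R * X^+4 * B^+3 * Hh^+5 - 4%:R * X^+4 * B^+3 * Hh^+6 - 8%:R * X^+4 * B^+3 * Hh^+7 - 24%:R * X^+5 * C * Hh^+4 - 48%:R * X^+5 * C * Hh^+5 - 96%:R * X^+5 * C * Hh^+6 - 192%:R * X^+5 * C * Hh^+7 - 384%:R * X^+5 * C * Hh^+8 - 2%:R * X^+5 * B * C^+2 * Hh^+4 - 4%:R * X^+5 * B * C^+2 * Hh^+5 - 8%:R * X^+5 * B * C^+2 * Hh^+6 - 16%:R * X^+5 * B * C^+2 * Hh^+7 - 32%:R * X^+5 * B * C^+2 * Hh^+8 - 64%:R * X^+5 * B * C^+2 * Hh^+9 - 13%:R * X^+5 * B^+2 * Hh^+4 - 26%:R * X^+5 * B^+2 * Hh^+5 - 52%:R * X^+5 * B^+2 * Hh^+6 - 104%:R * X^+5 * B^+2 * Hh^+7 + 3%:R * X^+5 * B^+3 * C * Hh^+4 + 6%:R * X^+5 * B^+3 * C * Hh^+5 + 12%:R * X^+5 * B^+3 * C * Hh^+6 + 24%:R * X^+5 * B^+3 * C * Hh^+7 + 48%:R * X^+5 * B^+3 * C * Hh^+8 - 5%:R * X^+6 * C^+2 * Hh^+4 - 10%:R * X^+6 * C^+2 * Hh^+5 - 20%:R * X^+6 * C^+2 * Hh^+6 - 40%:R * X^+6 * C^+2 * Hh^+7 - 80%:R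 * X^+6 * C^+2 * Hh^+8 - 160%:R * X^+6 * C^+2 * Hh^+9 - 21%:R * X^+6 * B * Hh^+4 - 42%:R * X^+6 * B * Hh^+5 - 84%:R * X^+6 * B * Hh^+6 - 168%:R * X^+6 * B * Hh^+7 + X^+6 * B^+2 * C * Hh^+4 + 2%:R * X^+6 * B^+2 * C * Hh^+5 + 4%:R * X^+6 * B^+2 * C * Hh^+6 + 8%:R * X^+6 * B^+2 * C * Hh^+7 + 16%:R * X^+6 * B^+2 * C * Hh^+8 + X^+6 * B^+4 * Hh^+4 + 2%:R * X^+6 * B^+4 * Hh^+5 + 4%:R * X^+6 * B^+4 * Hh^+6 + 8%:R * X^+6 * B^+4 * Hh^+7 - 9%:R * X^+7 * Hh^+4 - 18%:R * X^+7 * Hh^+5 - 36%:R * X^+7 * Hh^+6 - 72%:R * X^+7 * Hh^+7 - 5%:R * X^+7 * B * C * Hh^+4 - 10%:R * X^+7 * B * C * Hh^+5 - 20%:R * X^+7 * B * C * Hh^+6 - 40%:R * X^+7 * B * C * Hh^+7 - 80%:R * X^+7 * B * C * Hh^+8 + 2%:R * X^+7 * B^+3 * Hh^+4 + 4%:R * X^+7 * B^+3 * Hh^+5 + 8%:R * X^+7 * B^+3 * Hh^+6 + 16%:R * X^+7 * B^+3 * Hh^+7 - 3%:R * X^+8 * C * Hh^+4 - 6%:R * X^+8 * C * Hh^+5 - 12%:R * X^+8 * C * Hh^+6 - 24%:R * X^+8 * C * Hh^+7 - 48%:R * X^+8 * C * Hh^+8 + X^+8 * B^+2 * Hh^+4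 + 2%:R * X^+8 * B^+2 * Hh^+5 + 4%:R * X^+8 * B^+2 * Hh^+6 + 8%:R * X^+8 * B^+2 * Hh^+7))). rewrite /P0 /P1 /P2. ring.
Qed.
End Main.

Lemma noroot (F : fieldType) (b c x : F) :
  irreducible_poly (gpoly b c) -> ~~ root (gpoly b c) x.
Proof.
move=> irr; apply/negP => rt.
have dv : ('X - x%:P) %| gpoly b c by rewrite dvdp_XsubCl.
have := irr.2 ('X - x%:P); rewrite size_XsubC => /(_ isT dv) /eqp_size hs.
have : (gpoly b c)`_3 = 0 by rewrite nth_default // -hs size_XsubC.
rewrite /gpoly !coefD !coefCM !coefC !coefXn !coefX /= !mulr0 !addr0.
by move/eqP; rewrite oner_eq0.
Qed.

Lemma discnz (F : fieldType) (b c : F) : (2%:R : F) != 0 -> (3%:R : F) != 0 ->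
  irreducible_poly (gpoly b c) ->
  (b * c - 9%:R) ^+ 2 - 4%:R * (b ^+ 2 - 3%:R * c) * (c ^+ 2 - 3%:R * b) != 0.
Proof.
move=> h2 h3 irr; apply/negP => /eqP D0.
have h27 : (27%:R : F) != 0.
  by rewrite (_ : 27%:R = 3%:R ^+ 3) ?expf_neq0 // -natrX.
case: (eqVneq (b ^+ 2 - 3%:R * c) 0) => he.
  have hu : b * c - 9%:R = 0.
    by move: D0; rewrite he mulr0 mul0r subr0 => /eqP; rewrite expf_eq0 /= => /eqP.
  apply: (negP (noroot (- b / 3%:R) irr)); apply/rootP.
  have -> : (gpoly b c).[- b / 3%:R] =
     (2%:R * b * (b ^+ 2 - 3%:R * c) - 3%:R * (b * c - 9%:R)) / 27%:R.
    rewrite /gpoly !hornerD !hornerCM !hornerXn hornerX hornerC. field. by rewrite h3 h27.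
  by rewrite he hu !mulr0 subrr mul0r.
apply: (negP (noroot ((9%:R - b * c) / (2%:R * (b ^+ 2 - 3%:R * c))) irr)).
apply/rootP.
have -> : (gpoly b c).[(9%:R - b * c) / (2%:R * (b ^+ 2 - 3%:R * c))] =
   (27%:R - 9%:R * b * c + 2%:R * b ^+ 3) *
   ((b * c - 9%:R) ^+ 2 - 4%:R * (b ^+ 2 - 3%:R * c) * (c ^+ 2 - 3%:R * b))
   / (3%:R * (2%:R * (b ^+ 2 - 3%:R * c)) ^+ 3).
  rewrite /gpoly !hornerD !hornerCM !hornerXn hornerX hornerC. field. rewrite he h3 h2 /= andbT (_ : 8%:R = 2%:R ^+ 3 :> F) ?expf_neq0 // -natrX //.
have -> : (b * c - 9%:R) ^+ 2 - 4%:R * (b ^+ 2 - 3%:R * c) * (c ^+ 2 - 3%:R * b) = 0 := D0.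
by rewrite mulr0 mul0r.
Qed.

Theorem mainTheorem6 (F : finFieldType) (p : nat) (b c : F) :
  prime p -> p \in [pchar F] -> p != 2%N -> p != 3%N ->
  irreducible_poly (gpoly b c) ->
  [/\ (size (Hpi b c) <= 3)%N
      /\ (exists2 k : F, k != 0 & (Hpi b c)`_2 = k *: h0 b c),
      (exists2 k : F, k != 0 &
         disc2 (Hpi b c) = k *: (gpoly b c ^+ 2 * fpi b c))
    & ((b ^+ 2 - 3%:R * c != 0) || (b * c - 9%:R != 0))
      /\ (b * c - 9%:R) ^+ 2 - 4%:R * (b ^+ 2 - 3%:R * c) * (c ^+ 2 - 3%:R * b) != 0 ].
Proof.
move=> pr hp p2 p3 irr.
have h2 : (2%:R : F) != 0 by rewrite -(dvdn_pcharf hp) dvdn_prime2.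
have h3 : (3%:R : F) != 0 by rewrite -(dvdn_pcharf hp) dvdn_prime2.
have hD := discnz h2 h3 irr.
have hk : ((2%:R : F)^-1 ^+ 4) != 0 by rewrite expf_neq0 // invr_eq0.
split.
- split; first exact: Hpi_size.
  by exists (- ((2%:R : F)^-1 ^+ 4)); [rewrite oppr_eq0 | exact: part1].
- by exists ((2%:R : F)^-1 ^+ 4); [ | exact: part2].
split; last exact: hD.
rewrite -negb_and; apply: contra hD => /andP[/eqP e0 /eqP u0].
by rewrite e0 u0 expr0n /= mulr0 mul0r subrr.
Qed.
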